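(* For all integers $m\ge1$ and $r\ge2$, the determinant of the Hessian matrix $\big(\partial_{\xi_i}\partial_{\xi_j}A_r(\xi)\big)_{i,j=1}^m$ is a nonzero polynomial in $\xi=(\xi_1,\dots,\xi_m)$.
   Context: $A_r(\xi_1,\dots,\xi_m)=\sum_{k\in\mathbb N^m,\ \sum_ik_i=r}\binom{r}{k_1,\dots,k_m}^2\prod_i\xi_i^{k_i}$, where $\binom{r}{k_1,\dots,k_m}$ is the multinomial coefficient. *)

(* Defs.v *)
From HB Require Import structures.
From mathcomp Require Import all_boot all_order all_algebra.
Set Implicit Arguments. Unset Strict Implicit. Unset Printing Implicit Defensive.
Import Order.TTheory GRing.Theory Num.Theory.
Local Open Scope ring_scope.

Fixpoint mpoly (n : nat) : comNzRingType :=
  match n with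
  | 0 => int
  | n'.+1 => {poly (mpoly n')}
  end.

(* The variable xi_(i+1) (0-based index i) in mpoly n; variable i < n' of
   mpoly n'.+1 is the constant (in the outer variable) polynomial var n' i,
   and variable n' is the outer indeterminate 'X. *)
Fixpoint var (n : nat) (i : nat) : mpoly n :=
  match n return mpoly n with
  | 0 => 0
  | n'.+1 => if i == n' then 'X else (@var n' i)%:P
  end.

Fixpoint pderiv (n : nat) (i : nat) : mpoly n -> mpoly n :=
  match n return mpoly n -> mpoly n with
  | 0 => fun _ => 0
  | n'.+1 => fun p : {poly mpoly n'} =>
      if i == n' then deriv p else map_poly (@pderiv n' i) p
  end.

Definition multinom (m r : nat) (k : {ffun 'I_m -> 'I_r.+1}) : nat :=
  (r`! %/ \prod_(i < m) (k i)`!)%N.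

Definition A_poly (m r : nat) : mpoly m :=
  \sum_(k : {ffun 'I_m -> 'I_r.+1} | (\sum_(i < m) (k i : nat))%N == r)
     ((multinom k) ^ 2)%N%:R * \prod_(i < m) @var m i ^+ k i.

Definition hessian (m : nat) (p : mpoly m) : 'M[mpoly m]_m :=
  \matrix_(i < m, j < m) @pderiv m i (@pderiv m j p).

(* Main.v *)
Require Import Defs.
From HB Require Import structures.
From mathcomp Require Import all_boot all_order all_algebra.
From Stdlib Require Import Lia.
Set Implicit Arguments. Unset Strict Implicit. Unset Printing Implicit Defensive.
Import Order.TTheory GRing.Theory Num.Theory.
Local Open Scope ring_scope.

Lemma pd0 n i : @pderiv n i 0 = 0.
Proof. by case: n => [|n] //=; case: eqP => _; rewrite ?deriv0 ?map_poly0. Qed.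

Lemma pdD n i (p q : mpoly n) : pderiv i (p + q) = pderiv i p + pderiv i q.
Proof.
elim: n p q => [|n IH] p q /=; first by rewrite addr0.
case: eqP => _; first by rewrite derivD.
apply/polyP => k; by rewrite coefD !coef_map_id0 ?pd0 // coefD IH.
Qed.

Lemma pdN n i (p : mpoly n) : pderiv i (- p) = - pderiv i p.
Proof. by apply/eqP; rewrite -subr_eq0 opprK -pdD addNr pd0. Qed.

Lemma pdsum n i (I : Type) (s : seq I) (P : pred I) (F : I -> mpoly n) :
  pderiv i (\sum_(x <- s | P x) F x) = \sum_(x <- s | P x) pderiv i (F x).
Proof. exact: (big_morph _ (@pdD n i) (@pd0 n i)). Qed.

Lemma pdM n i (p q : mpoly n) : pderiv i (p * q) = pderiv i p * q + p * pderiv i q.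
Proof.
elim: n p q => [|n IH] p q /=; first by rewrite mul0r mulr0 addr0.
case: eqP => _; first by rewrite derivM.
apply/polyP => k; rewrite coefD !coefM !coef_map_id0 ?pd0 // coefM pdsum.
rewrite -big_split /=; apply: eq_bigr => j _.
by rewrite IH !coef_map_id0 ?pd0.
Qed.

Lemma pd1 n i : @pderiv n i 1 = 0.
Proof.
elim: n => [|n IH] //=; case: eqP => _; first by rewrite derivC.
by apply/polyP => k; rewrite coef_map_id0 ?pd0 // !coefC; case: eqP => _; rewrite ?IH ?pd0.
Qed.

Lemma pdC n i (c : mpoly n) : @pderiv n.+1 i c%:P = if i == n then 0 else (pderiv i c)%:P.
Proof.
rewrite /=; case: eqP => _; first by rewrite derivC.
by apply/polyP => k; rewrite coef_map_id0 ?pd0 // !coefC; case: eqP => _; rewrite ?pd0.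
Qed.

Lemma pdX n i : @pderiv n.+1 i 'X = (i == n)%:R.
Proof.
rewrite /=; case: (eqVneq i n) => [_|ne]; first by rewrite derivX.
apply/polyP => k; rewrite coef_map_id0 ?pd0 // coefX mulr0n coef0; by case: (k == 1); rewrite ?pd1 ?pd0.
Qed.

Lemma pdvar n i j : (i < n)%N -> (j < n)%N -> pderiv i (@var n j) = (i == j)%:R.
Proof.
elim: n => [|n IH] ilt jlt; first by [].
have -> : @var n.+1 j = if j == n then 'X else (var n j)%:P by [].
have -> : ((i == j)%:R : {poly mpoly n}) = ((i == j)%:R : mpoly n)%:P by rewrite polyC_natr.
case: (eqVneq j n) => [->|jn].
  by rewrite pdX polyC_natr.
rewrite pdC; have jlt' : (j < n)%N by rewrite ltn_neqAle jn -ltnS.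
case: (eqVneq i n) => [iE|inn].
  by rewrite iE eq_sym (ltn_eqF jlt').
rewrite IH //; by rewrite ltn_neqAle inn -ltnS.
Qed.

Lemma pdexp n i (x : mpoly n) k : pderiv i (x ^+ k) = (x ^+ k.-1 * pderiv i x) *+ k.
Proof.
elim: k => [|k IH]; first by rewrite expr0 pd1 mulr0n.
rewrite exprS pdM IH mulrnAr mulrA mulrS; case: k IH => [|k] IH.
  by rewrite !mulr0n addr0 expr0 mul1r mulr1 addr0.
by rewrite /= -exprS mulrC.
Qed.

Lemma pdprod0 n i (I : Type) (s : seq I) (P : pred I) (F : I -> mpoly n) :
  (forall x, P x -> pderiv i (F x) = 0) -> pderiv i (\prod_(x <- s | P x) F x) = 0.
Proof.
move=> H; apply: (big_ind (fun y => pderiv i y = 0)) => //; first exact: pd1.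
by move=> a b Ha Hb; rewrite pdM Ha Hb mul0r mulr0 addr0.
Qed.

Definition mono n (e : 'I_n -> nat) : mpoly n := \prod_(l < n) @var n l ^+ e l.

Lemma pdmono n (i : 'I_n) (e : 'I_n -> nat) :
  pderiv i (mono e) = mono (fun l => (e l - (l == i))%N) *+ e i.
Proof.
rewrite /mono (bigD1 i) //= pdM pdprod0 ?mulr0 ?addr0; last first.
  move=> l li; rewrite pdexp pdvar ?ltn_ord // (_ : (i == l :> nat) = false) ?mulr0 ?mul0rn //.
  by apply/negbTE; rewrite eq_sym.
rewrite [in RHS](bigD1 i) //= eqxx subn1 pdexp pdvar ?ltn_ord // eqxx mulr1 -mulrnAl; congr (_ * _).
by apply: eq_bigr => l /negbTE ->; rewrite subn0.
Qed.

Fixpoint ev (n : nat) : mpoly n -> rat :=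
  match n return mpoly n -> rat with
  | 0 => fun x : int => x%:~R
  | n'.+1 => fun p : {poly mpoly n'} => @ev n' (p.[(n' == 0)%:R])
  end.

Lemma evD n (p q : mpoly n) : ev (p + q) = ev p + ev q.
Proof. elim: n p q => [|n IH] p q /=; [exact: intrD | by rewrite hornerD IH]. Qed.
Lemma evM n (p q : mpoly n) : ev (p * q) = ev p * ev q.
Proof. elim: n p q => [|n IH] p q /=; [exact: intrM | by rewrite hornerM IH]. Qed.
Lemma ev1 n : @ev n 1 = 1.
Proof. elim: n => [|n IH] //=; by rewrite hornerC IH. Qed.
Lemma ev0 n : @ev n 0 = 0.
Proof. elim: n => [|n IH] //=; by rewrite horner0 IH. Qed.

Lemma ev_zmod n : GRing.zmod_morphism (@ev n).
Proof.
move=> p q; have evN : forall x : mpoly n, ev (- x) = - ev x.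
  by move=> x; apply/eqP; rewrite -subr_eq0 opprK -evD addNr ev0.
by rewrite evD evN.
Qed.
Lemma ev_monoid n : GRing.monoid_morphism (@ev n).
Proof. by split; [exact: ev1 | move=> p q; exact: evM]. Qed.

HB.instance Definition _ n := GRing.isZmodMorphism.Build (mpoly n) rat (@ev n) (@ev_zmod n).
HB.instance Definition _ n := GRing.isMonoidMorphism.Build (mpoly n) rat (@ev n) (@ev_monoid n).

Lemma det_ev n (A : 'M[mpoly n]_n) : ev (\det A) = \det (map_mx (@ev n) A).
Proof. by rewrite det_map_mx. Qed.
Lemma kern n (a b c d : rat) (v : 'rV[rat]_n.+1) :
  0 < a -> d < c -> a * c <= b * b ->
  a * v 0 ord0 + b * (\sum_(j < n.+1 | j != ord0) v 0 j) = 0 ->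
  (forall k : 'I_n.+1, k != ord0 ->
     (c - d) * v 0 k = b * v 0 ord0 + c * (\sum_(j < n.+1 | j != ord0) v 0 j)) ->
  v = 0.
Proof.
set S := \sum_(j < n.+1 | j != ord0) v 0 j; set v0 := v 0 ord0.
move=> a0 dc acb E0 Ek.
set T := b * v0 + c * S.
have hT : (c - d) * S = T *+ n.
  rewrite /S mulr_sumr (eq_bigr (fun _ => T)) //.
  by rewrite sumr_const cardC1 card_ord.
have av0 : a * v0 = - (b * S) by apply/eqP; rewrite -addr_eq0 E0.
have e1 : a * T = (a * c - b * b) * S.
  rewrite /T mulrDr mulrA (mulrC a b) -mulrA av0 mulrBl mulrA.
  by rewrite mulrN -mulrA addrC !mulrA.
have hS : (a * (c - d) + (b * b - a * c) *+ n) * S = 0.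
  rewrite mulrDl -mulrA hT mulrnAr e1 -mulrnAl mulrnBl.
  by rewrite -mulrDl mulrnBl addrA subrK subrr mul0r.
have S0 : S = 0.
  move/eqP: hS; rewrite mulf_eq0 => /orP [|/eqP //].
  have : 0 < a * (c - d) + (b * b - a * c) *+ n.
    apply: ltr_pwDl; first by rewrite mulr_gt0 // subr_gt0.
    by rewrite mulrn_wge0 // subr_ge0.
  by move=> /gt_eqF ->.
have v00 : v0 = 0.
  by move/eqP: av0; rewrite S0 mulr0 oppr0 mulf_eq0 (gt_eqF a0) => /eqP.
apply/rowP => k; rewrite mxE.
case: (eqVneq k ord0) => [->|kn]; first exact: v00.
move: (Ek k kn); rewrite -/S -/v0 S0 v00 !mulr0 addr0 => /eqP.
by rewrite mulf_eq0 subr_eq0 (gt_eqF dc) => /eqP.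
Qed.

Lemma pdMn n i (x : mpoly n) c : pderiv i (x *+ c) = pderiv i x *+ c.
Proof. elim: c => [|c IH]; by rewrite ?mulr0n ?pd0 // !mulrS pdD IH. Qed.

Lemma pdnatM n i c (x : mpoly n) : pderiv i (c%:R * x) = pderiv i x *+ c.
Proof. by rewrite mulr_natl pdMn. Qed.

Lemma ev_var n l : (l < n)%N -> ev (@var n l) = (l == 0)%:R.
Proof.
elim: n => [|n IH] // ln.
have -> : @var n.+1 l = if l == n then 'X else (var n l)%:P by [].
have -> : forall p : mpoly n.+1, ev p = ev (p.[(n == 0)%:R]) by [].
case: (eqVneq l n) => [->|ne].
  by rewrite hornerX rmorph_nat.
rewrite hornerC IH //; by rewrite ltn_neqAle ne -ltnS.
Qed.

Lemma evX n (x : mpoly n) k : ev (x ^+ k) = ev x ^+ k.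
Proof. elim: k => [|k IH]; by rewrite ?expr0 ?ev1 // !exprS evM IH. Qed.

Lemma evMn n (x : mpoly n) k : ev (x *+ k) = ev x *+ k.
Proof. elim: k => [|k IH]; by rewrite ?mulr0n ?ev0 // !mulrS evD IH. Qed.

Lemma ev_mono_1 n (e : 'I_n -> nat) :
  (forall l : 'I_n, (l : nat) != 0 -> e l = 0%N) -> ev (mono e) = 1.
Proof.
move=> H; rewrite /mono (big_morph _ (@evM n) (@ev1 n)); apply: big1 => l _.
rewrite evX ev_var //; case: (eqVneq (l : nat) 0) => [_|ne]; first by rewrite expr1n.
by rewrite (H l ne) expr0.
Qed.

Lemma ev_mono_0 n (e : 'I_n -> nat) (l : 'I_n) :
  (l : nat) != 0 -> e l != 0%N -> ev (mono e) = 0.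
Proof.
move=> ne el; rewrite /mono (big_morph _ (@evM n) (@ev1 n)) (bigD1 l) //= evX ev_var //.
by rewrite (negbTE ne) expr0n (negbTE el) mul0r.
Qed.

Lemma hess_expand m r (i j : 'I_m) :
  ev (hessian (A_poly m r) i j) =
  \sum_(k : {ffun 'I_m -> 'I_r.+1} | (\sum_(i < m) (k i : nat))%N == r)
    (ev (mono (fun l => (k l - (l == j) - (l == i))%N)) *+ (k i - (i == j))%N *+ k j)
      *+ (multinom k ^ 2)%N.
Proof.
rewrite mxE /A_poly !pdsum (big_morph _ (@evD m) (@ev0 m)); apply: eq_bigr => k _.
have -> : \prod_(i < m) var m i ^+ k i = mono (fun l => k l) by [].
by rewrite pdnatM pdMn pdmono pdMn pdmono !evMn.
Qed.
Ltac nlia := (try rewrite -?plusE -?multE -?minusE in * ); (try rewrite -?plusE -?multE -?minusE); simpl nat_of_bool in *; lia.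

Definition Kn n s (i j l : 'I_n.+1) : nat := ((l == i) + (l == j) + (l == ord0) * s)%N.
Definition Kf n s (i j : 'I_n.+1) : {ffun 'I_n.+1 -> 'I_s.+3} :=
  [ffun l => inord (Kn s i j l)].

Lemma Kn_lt n s (i j l : 'I_n.+1) : (Kn s i j l < s.+3)%N.
Proof.
rewrite /Kn; case: (l == i); case: (l == j); case: (l == ord0);
  rewrite /= ?mul1n ?mul0n. all: try done. all: apply/ssrnat.ltP; nlia.
Qed.

Lemma Kf_val n s (i j l : 'I_n.+1) : (Kf s i j l : nat) = Kn s i j l.
Proof. by rewrite ffunE inordK // Kn_lt. Qed.

Lemma sum_eq1 n (i : 'I_n) : (\sum_(l < n) (l == i) = 1)%N.
Proof.
rewrite (bigD1 i) //= eqxx big1 // => l /negbTE -> //.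
Qed.

Lemma Kn_sum n s (i j : 'I_n.+1) : (\sum_l Kn s i j l = s.+2)%N.
Proof.
rewrite /Kn !big_split /= !sum_eq1 -big_distrl /= sum_eq1 mul1n.
by rewrite add1n addSn.
Qed.

Lemma Kn_off n s (i j l : 'I_n.+1) : l != ord0 -> Kn s i j l = ((l == i) + (l == j))%N.
Proof. by rewrite /Kn => /negbTE ->; rewrite mul0n addn0. Qed.

Lemma term0 n s (i j : 'I_n.+1) (k : {ffun 'I_n.+1 -> 'I_s.+3}) :
  (\sum_(l < n.+1) (k l : nat))%N == s.+2 -> k != Kf s i j ->
  ev (mono (fun l => (k l - (l == j) - (l == i))%N)) *+ (k i - (i == j))%N *+ k j = 0.
Proof.
move=> hs hk.
case: (eqVneq (k j : nat) 0%N) => [->|hj]; first by rewrite mulr0n.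
case: (eqVneq (k i - (i == j))%N 0%N) => [->|hi]; first by rewrite mulr0n mul0rn.
case: (boolP [exists l : 'I_n.+1, (l != ord0) && ((k l - (l == j) - (l == i))%N != 0%N)]).
  case/existsP => l /andP [l0 ne]; rewrite (@ev_mono_0 _ _ l) ?mul0rn //.
move/existsPn => H0.
have hl : forall l, l != ord0 -> (k l : nat) = Kn s i j l.
  move=> l l0; move: (H0 l); rewrite l0 /= negbK => /eqP H.
  rewrite Kn_off //.
  case: (eqVneq l i) => [li|li]; case: (eqVneq l j) => [lj|lj].
  - subst i j; rewrite eqxx /= in H hi *; rewrite -lt0n in hi.
    move/ssrnat.ltP: hi => hi; move: H hi; nlia.
  - subst i; rewrite eqxx (negbTE lj) /= in H hi *; rewrite -lt0n in hi.
    move/ssrnat.ltP: hi => hi; move: H hi; nlia.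
  - subst j; rewrite eqxx (negbTE li) /= in H hj *; rewrite -lt0n in hj.
    move/ssrnat.ltP: hj => hj; move: H hj; nlia.
  - rewrite (negbTE li) (negbTE lj) /= in H *; move: H; nlia.
have h0 : (k ord0 : nat) = Kn s i j ord0.
  have e : (\sum_l (k l : nat) = \sum_l Kn s i j l)%N by rewrite (eqP hs) Kn_sum.
  move: e; rewrite (bigD1 ord0) //= [in RHS](bigD1 ord0) //=.
  by rewrite (eq_bigr _ hl) => /addIn.
case/negP: hk; apply/eqP/ffunP => l; apply/val_inj; rewrite /= Kf_val.
case: (eqVneq l ord0) => [->|]; [exact: h0 | exact: hl].
Qed.

Lemma entry n s (i j : 'I_n.+1) :
  ev (hessian (A_poly n.+1 s.+2) i j) =
  ((Kn s i j j * (Kn s i j i - (i == j)) * multinom (Kf s i j) ^ 2)%N)%:R.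
Proof.
rewrite hess_expand (bigD1 (Kf s i j)); last first.
  by rewrite (eq_bigr _ (fun l _ => Kf_val s i j l)) Kn_sum.
rewrite big1 ?addr0; last first.
  by move=> k /andP [hs hk]; rewrite term0 // mul0rn.
rewrite ev_mono_1; last first.
  move=> l l0; rewrite Kf_val.
  have l0' : l != ord0 by apply: contra l0 => /eqP ->.
  by rewrite Kn_off // addnK subnn.
rewrite !Kf_val.
by rewrite /= addr0 -!mulrnA; congr (_ *+ _); rewrite mulnA (mulnC (Kn s i j j)).
Qed.

Lemma prod_rest n (i j : 'I_n.+1) :
  (\prod_(l < n.+1 | l != ord0) ((l == i) + (l == j))`! =
   if (i == j) && (i != ord0) then 2 else 1)%N.
Proof.
case: (boolP ((i == j) && (i != ord0))) => [/andP [/eqP eij i0] | h].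
  subst j; rewrite (bigD1 i) //= eqxx big1 => [//|l /andP [_ li]].
  by rewrite (negbTE li).
apply: big1 => l l0.
case: (eqVneq l i) => [li|li]; case: (eqVneq l j) => [lj|lj] //.
by move: h; rewrite -li -lj eqxx l0.
Qed.

Lemma prod_K n s (i j : 'I_n.+1) :
  (\prod_l (Kf s i j l)`! =
   ((ord0 == i) + (ord0 == j) + s)`! * if (i == j) && (i != ord0) then 2 else 1)%N.
Proof.
rewrite (eq_bigr (fun l => (Kn s i j l)`!)) => [|l _]; last by rewrite Kf_val.
rewrite (bigD1 ord0) //= -prod_rest; congr (_ * _)%N.
  by rewrite /Kn eqxx mul1n.
by apply: eq_bigr => l l0; rewrite Kn_off.
Qed.

Definition mval n s (i j : 'I_n.+1) :=
  (Kn s i j j * (Kn s i j i - (i == j)) * multinom (Kf s i j) ^ 2)%N.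

Lemma e2 s : (1 + 1 + s = s.+2)%N. Proof. by rewrite addnC addn2. Qed.
Lemma e1 s : (1 + 0 + s = s.+1)%N. Proof. by rewrite addn0 add1n. Qed.
Lemma e1' s : (0 + 1 + s = s.+1)%N. Proof. by rewrite add0n add1n. Qed.
Lemma e0 s : (0 + 0 + s = s)%N. Proof. by rewrite add0n. Qed.

Lemma mval00 n s : mval s (ord0 : 'I_n.+1) ord0 = (s.+2 * s.+1)%N.
Proof.
rewrite /mval /multinom prod_K eqxx /= e2 muln1 divnn fact_gt0.
by rewrite /Kn eqxx /= mul1n e2 subn1 /= exp1n muln1.
Qed.

Lemma mval0j n s (j : 'I_n.+1) : j != ord0 -> mval s ord0 j = (s.+2 * s.+1 * s.+2)%N.
Proof.
move=> j0; have j0' : (ord0 == j) = false by rewrite eq_sym (negbTE j0).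
rewrite /mval /multinom prod_K eqxx j0' /= e1 muln1 factS mulnK ?fact_gt0 //.
rewrite /Kn !eqxx j0' (negbTE j0) /= -mulnn; nlia.
Qed.

Lemma mvalj0 n s (j : 'I_n.+1) : j != ord0 -> mval s j ord0 = (s.+2 * s.+1 * s.+2)%N.
Proof.
move=> j0; have j0' : (ord0 == j) = false by rewrite eq_sym (negbTE j0).
rewrite /mval /multinom prod_K eqxx j0' (negbTE j0) /= e1' muln1 factS mulnK ?fact_gt0 //.
rewrite /Kn !eqxx j0' (negbTE j0) /= -mulnn; nlia.
Qed.

Lemma mvaljj n s (j : 'I_n.+1) : j != ord0 -> mval s j j = ((s.+2 * s.+1) %/ 2 * ((s.+2 * s.+1) %/ 2) * 2)%N.
Proof.
move=> j0; have j0' : (ord0 == j) = false by rewrite eq_sym (negbTE j0).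
rewrite /mval /multinom prod_K eqxx j0' j0 /= e0 !factS mulnA (mulnC _ s`!) divnMl ?fact_gt0 //.
rewrite /Kn !eqxx (negbTE j0) /= -mulnn; nlia.
Qed.

Lemma mvalij n s (i j : 'I_n.+1) : i != ord0 -> j != ord0 -> i != j ->
  mval s i j = (s.+2 * s.+1 * (s.+2 * s.+1))%N.
Proof.
move=> i0 j0 ij; have j0' : (ord0 == j) = false by rewrite eq_sym (negbTE j0).
have i0' : (ord0 == i) = false by rewrite eq_sym (negbTE i0).
have ji : (j == i) = false by rewrite eq_sym (negbTE ij).
rewrite /mval /multinom prod_K j0' i0' (negbTE ij) /= e0 muln1 !factS mulnA mulnK ?fact_gt0 //.
rewrite /Kn !eqxx (negbTE j0) (negbTE i0) ji (negbTE ij) /= -mulnn; nlia.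
Qed.

Lemma colsum n s (v : 'rV[rat]_n.+1) k :
  (v *m map_mx (@ev n.+1) (hessian (A_poly n.+1 s.+2))) 0 k = \sum_j v 0 j * (mval s j k)%:R.
Proof. by rewrite !mxE; apply: eq_bigr => j _; rewrite mxE entry. Qed.

Theorem mainTheorem7 (m r : nat) (hm : (1 <= m)%N) (hr : (2 <= r)%N) :
  \det (hessian (A_poly m r)) != 0.
Proof.
case: m hm => [//|n] _; case: r hr => [//|[//|s]] _.
apply/negP => /eqP H.
have : \det (map_mx (@ev n.+1) (hessian (A_poly n.+1 s.+2))) == 0.
  by rewrite -det_ev H ev0.
case/det0P => v vn0 hv.
set x := (s.+2 * s.+1)%N; set g := (x %/ 2)%N.
have Hv : forall k, \sum_j v 0 j * (mval s j k)%:R = 0.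
  by move=> k; rewrite -colsum hv mxE.
set S := \sum_(j < n.+1 | j != ord0) v 0 j.
have := @kern n x%:R (x * s.+2)%:R (x * x)%:R (g * g * 2)%:R v.
move=> K; case/negP: vn0; apply/eqP; apply: K.
- by rewrite ltr0n /x muln_gt0.
- rewrite ltr_nat; have hg : (g * 2 <= x)%N by exact: leq_trunc_div.
  have hx : (0 < x)%N by rewrite /x muln_gt0.
  have h2 := leq_mul hg hg; have hxx : (0 < x * x)%N by rewrite muln_gt0 hx.
  clearbody g x; move/ssrnat.leP: h2 => h2; move/ssrnat.ltP: hxx => hxx; apply/ssrnat.ltP.
  rewrite -?plusE -?multE in h2 hxx *; nia.
- rewrite -!natrM ler_nat; have hx : (x <= s.+2 * s.+2)%N by rewrite /x leq_mul.
  have h3 := leq_mul (leqnn x) (leq_mul hx (leqnn x)).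
  clearbody g x; move/ssrnat.leP: h3 => h3; apply/ssrnat.leP; rewrite -?plusE -?multE in h3 *; nia.
- move: (Hv ord0); rewrite (bigD1 ord0) //= mval00.
  rewrite (eq_bigr (fun j => v 0 j * (x * s.+2)%:R)) => [|j j0]; last by rewrite mvalj0.
  by rewrite -mulr_suml mulrC (mulrC _ (x * s.+2)%:R).
- move=> k k0; move: (Hv k); rewrite (bigD1 ord0) //= mval0j //.
  rewrite (bigD1 k) //= mvaljj //.
  rewrite (eq_bigr (fun j => v 0 j * (x * x)%:R)) => [|j /andP [j0 jk]]; last by rewrite mvalij.
  rewrite -mulr_suml.
  have -> : \sum_(i < n.+1 | (i != ord0) && (i != k)) v 0 i = S - v 0 k.
    by rewrite /S [X in _ = X - _](bigD1 k) //= [v 0 k + _]addrC addrK.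
  rewrite -/x -/g -/S.
  move: (x * x)%:R (g * g * 2)%:R (x * s.+2)%:R (v 0 ord0) (v 0 k) => c d b v0 vk.
  move=> /eqP; rewrite addr_eq0 => /eqP E.
  rewrite (mulrC b v0) E opprD mulrBl mulrBl opprB (mulrC c S) addrA addrNK.
  by rewrite addrC (mulrC c vk) (mulrC d vk).
Qed.
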